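(* Let $M$ be a generalized modularity matrix on $V$ with induced modularity function $Q$, and let $S_1,\dots,S_k$ ($k\ge1$) be pairwise disjoint nonempty subsets of $V$ such that $Q(S_i)>0$ for all $i$ and $Q(S_i,S_j)<0$ for all $i\neq j$. If there exist positive numbers $\alpha_1,\dots,\alpha_k$ such that $$\alpha_iQ(S_i)>\sum_{j\ne i}\alpha_j\,|Q(S_i,S_j)|\qquad\text{for all } i=1,\dots,k,$$ then $M$ has at least $k$ positive eigenvalues (counted with multiplicity).
   Context: Let $V=\{1,\dots,n\}$ and let $A\in\mathbb{R}^{n\times n}$ be the adjacency matrix of an undirected connected weighted graph on $V$, possibly with loops, i.e. $A$ is symmetric, entrywise nonnegative and irreducible. A generalized modularity matrix is any matrix $M=A+\Delta-\sigma vv^{\mathsf T}$ where $\Delta$ is a real diagonal matrix, $v\ne0$ is entrywise nonnegative, and $\sigma>0$. For $S\subseteq V$, $\mathbb{1}_S$ is its characteristic vector; $Q(S)=\mathbb{1}_S^{\mathsf T}M\mathbb{1}_S$, and for disjoint $S,T$, $Q(S,T)=\mathbb{1}_S^{\mathsf T}M\mathbb{1}_T$. *)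

(* Defs.v *)
(* Reals are modelled by an arbitrary real closed field R. *)
From HB Require Import structures.
From mathcomp Require Import all_boot all_order all_algebra.
Set Implicit Arguments. Unset Strict Implicit. Unset Printing Implicit Defensive.
Import Order.TTheory GRing.Theory Num.Theory.
Local Open Scope ring_scope.

(* Adjacency matrix of an undirected connected weighted graph (loops allowed):
   symmetric, entrywise nonnegative, irreducible. *)
Definition irreducible_mx (R : numDomainType) (n : nat) (A : 'M[R]_n) : Prop :=
  forall S : {set 'I_n}, S != set0 -> S != setT ->
    exists i j, [/\ i \in S, j \notin S & A i j != 0].

Definition adjacency_mx (R : numDomainType) (n : nat) (A : 'M[R]_n) : Prop :=
  [/\ A^T = A, (forall i j, 0 <= A i j) & irreducible_mx A].

Definition charvec (R : numDomainType) (n : nat) (S : {set 'I_n}) : 'cV[R]_n :=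
  \col_i (i \in S)%:R.

Definition Qmod2 (R : numDomainType) (n : nat) (M : 'M[R]_n) (S T : {set 'I_n}) : R :=
  ((charvec R S)^T *m M *m charvec R T) 0 0.

Definition Qmod (R : numDomainType) (n : nat) (M : 'M[R]_n) (S : {set 'I_n}) : R :=
  Qmod2 M S S.

(* M has at least k positive eigenvalues counted with (algebraic) multiplicity:
   there are k positive reals (with repetition) whose linear factors, taken
   together, divide the characteristic polynomial of M. *)
Definition at_least_pos_eigenvalues (R : numDomainType) (n : nat) (M : 'M[R]_n)
    (k : nat) : Prop :=
  exists s : seq R, [/\ size s = k, all (fun x => 0 < x) s &
    (\prod_(x <- s) ('X - x%:P)) %| char_poly M].

(* Main.v *)
Require Import Defs.
From mathcomp Require Import all_boot all_order all_algebra.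
From mathcomp Require Import complex sesquilinear spectral.
From mathcomp Require Import ring lra.
Set Implicit Arguments. Unset Strict Implicit. Unset Printing Implicit Defensive.
Import Order.TTheory GRing.Theory Num.Theory Num.Def.
Local Open Scope ring_scope.
Local Open Scope sesquilinear_scope.
Lemma pair_ineq (R : realFieldType) (ai aj x y b : R) :
  0 < ai -> 0 < aj -> 
  - (`|b| * aj * x ^+ 2 / ai + `|b| * ai * y ^+ 2 / aj) / 2 <= x * b * y.
Proof.
move=> hi hj.
set u := x / ai; set w := y / aj.
have hx : x = u * ai by rewrite /u mulfVK // gt_eqF.
have hy : y = w * aj by rewrite /w mulfVK // gt_eqF.
have hP : 0 < ai * aj by rewrite mulr_gt0.
rewrite -subr_ge0.
case: (ltP b 0) => hb.
  rewrite ltr0_norm //.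
  have -> : x * b * y - - (- b * aj * x ^+ 2 / ai + - b * ai * y ^+ 2 / aj) / 2
     = (ai * aj) * (- b) * (u - w) ^+ 2 / 2.
    rewrite hx hy; field; by rewrite ?gt_eqF.
  apply: divr_ge0; last by [].
  by rewrite mulr_ge0 ?sqr_ge0 // mulr_ge0 ?oppr_ge0 ?ltW.
rewrite ger0_norm //.
have -> : x * b * y - - (b * aj * x ^+ 2 / ai + b * ai * y ^+ 2 / aj) / 2
     = (ai * aj) * b * (u + w) ^+ 2 / 2.
  rewrite hx hy; field; by rewrite ?gt_eqF.
apply: divr_ge0; last by [].
by rewrite mulr_ge0 ?sqr_ge0 // mulr_ge0 // ltW.
Qed.

Lemma posdef (R : realFieldType) k (B : 'M[R]_k) (alpha : 'I_k -> R) :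
  B^T = B -> (forall i, 0 < alpha i) ->
  (forall i, \sum_(j < k | j != i) alpha j * `|B i j| < alpha i * B i i) ->
  forall a : 'rV[R]_k, 0 <= (a *m B *m a^T) 0 0 /\ (a != 0 -> 0 < (a *m B *m a^T) 0 0).
Proof.
move=> Bsym apos hdom a.
have E : (a *m B *m a^T) 0 0 = \sum_i \sum_j a 0 i * B i j * a 0 j.
  rewrite !mxE; under eq_bigr do rewrite !mxE big_distrl /=.
  by rewrite exchange_big.
pose h i j := `|B i j| * alpha j * a 0 i ^+ 2 / alpha i.
pose g i := a 0 i ^+ 2 / alpha i * (alpha i * B i i - \sum_(j < k | j != i) alpha j * `|B i j|).
have Bs : forall i j, B j i = B i j.
  by move=> i j; rewrite -[in RHS]Bsym mxE.
have step : forall i, a 0 i ^+ 2 * B i i - \sum_(j < k | j != i) (h i j + h j i) / 2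
               <= \sum_j a 0 i * B i j * a 0 j.
  move=> i; rewrite [X in _ <= X](bigD1 i) //=.
  have -> : a 0 i * B i i * a 0 i = a 0 i ^+ 2 * B i i by rewrite expr2; ring.
  rewrite lerD2l -sumrN; apply: ler_sum => j _.
  rewrite /h (Bs i j).
  have := pair_ineq (a 0 i) (a 0 j) (B i j) (apos i) (apos j).
  by rewrite mulNr.
have sw : \sum_i \sum_(j < k | j != i) h j i = \sum_i \sum_(j < k | j != i) h i j.
  rewrite (exchange_big_dep xpredT) //=.
  apply: eq_bigr => i _; apply: eq_bigl => j; by rewrite eq_sym.
have gE : forall i, g i = a 0 i ^+ 2 * B i i - \sum_(j < k | j != i) h i j.
  move=> i; rewrite /g mulrBr mulr_sumr; congr (_ - _).
    by field; rewrite gt_eqF.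
  apply: eq_bigr => j _; rewrite /h; field; by rewrite gt_eqF.
have main : \sum_i g i <= (a *m B *m a^T) 0 0.
  rewrite E; apply: le_trans (ler_sum _ (fun i _ => step i)).
  rewrite le_eqVlt; apply/orP; left; apply/eqP.
  under [RHS]eq_bigr do rewrite -mulr_suml big_split /=.
  rewrite sumrB -mulr_suml big_split /= sw.
  have -> : forall x : R, (x + x) / 2 = x by move=> x; lra.
  by rewrite -sumrB; apply: eq_bigr => i _; rewrite gE.
have gpos : forall i, 0 <= g i /\ (a 0 i != 0 -> 0 < g i).
  move=> i; have hi := hdom i; rewrite -subr_gt0 in hi.
  split.
    by rewrite /g mulr_ge0 ?(ltW hi) // divr_ge0 ?sqr_ge0 // ltW.
  move=> nz; rewrite /g mulr_gt0 // divr_gt0 //.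
  by rewrite exprn_even_gt0 //= nz.
have g0 : 0 <= \sum_i g i by apply: sumr_ge0 => i _; case: (gpos i).
split; first exact: le_trans g0 main.
move=> anz.
have [i ai] : exists i, a 0 i != 0.
  apply/existsP; apply: contraR anz; rewrite negb_exists => /forallP H.
  apply/eqP/rowP => i; rewrite mxE; exact/eqP/negbNE/H.
apply: lt_le_trans main; rewrite (bigD1 i) //=.
apply: ltr_pwDl; first by case: (gpos i) => _; apply.
by apply: sumr_ge0 => j _; case: (gpos j).
Qed.

Lemma charpoly_sim (F : fieldType) n (P D : 'M[F]_n) : P \in unitmx ->
  char_poly (invmx P *m D *m P) = char_poly D.
Proof.
move=> Pu; rewrite /char_poly /char_poly_mx.
set Q := map_mx polyC P; set Qi := map_mx polyC (invmx P).
have QiQ : Qi *m Q = 1%:M by rewrite -map_mxM mulVmx // map_mx1.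
have -> : 'X%:M - map_mx polyC (invmx P *m D *m P) = Qi *m ('X%:M - map_mx polyC D) *m Q.
  rewrite !map_mxM mulmxBr mulmxBl -!mulmxA; congr (_ - _).
  by rewrite mul_scalar_mx -scalemxAr QiQ scalemx1.
rewrite !det_mulmx mulrC mulrA -det_mulmx.
by rewrite (mulmx1C QiQ) det1 mul1r.
Qed.

Lemma qf_expand (R : comNzRingType) k (a b : 'rV[R]_k) (B : 'M[R]_k) :
  (a *m B *m b^T) 0 0 = \sum_i \sum_j a 0 i * B i j * b 0 j.
Proof.
rewrite !mxE; under eq_bigr do rewrite !mxE big_distrl /=.
by rewrite exchange_big.
Qed.

Lemma iring (C : comNzRingType) (I a b c d x : C) : I * I = -1 ->
  (a + I * b) * x * (c - I * d) = x * (a * c + b * d) + I * (x * (b * c - a * d)).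
Proof.
move=> H.
transitivity (x * (a * c + b * d) + I * (x * (b * c - a * d)) - x * b * d * (I * I + 1)).
  ring.
by rewrite H addNr mulr0 subr0.
Qed.

Notation fc R := (real_complex R).

Lemma cpos (R : rcfType) k (B : 'M[R]_k) : B^T = B ->
  (forall c : 'rV[R]_k, 0 <= (c *m B *m c^T) 0 0 /\ (c != 0 -> 0 < (c *m B *m c^T) 0 0)) ->
  forall c : 'rV[R[i]]_k, c != 0 ->
  0 < (c *m map_mx (real_complex R) B *m (map_mx conjC c)^T) 0 0.
Proof.
move=> Bsym Bpos c cnz.
pose u := map_mx (@complex.Re R) c; pose v := map_mx (@complex.Im R) c.
have ce : forall j, c 0 j = fc R (u 0 j) + 'i%C * fc R (v 0 j).
  by move=> j; rewrite !mxE; apply: complexE.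
have cnz' : (u != 0) || (v != 0).
  apply: contraR cnz; rewrite negb_or !negbK => /andP[/eqP u0 /eqP v0].
  by apply/eqP/rowP => j; rewrite ce u0 v0 !mxE rmorph0 mulr0 addr0.
clearbody u v.
have Bs : forall i j, B j i = B i j by move=> i j; rewrite -[in RHS]Bsym mxE.
have fr : forall r : R, conjC (fc R r) = fc R r.
  move=> r; apply: conj_Creal; by rewrite complex_real.
rewrite qf_expand.
have -> : \sum_i \sum_j c 0 i * (map_mx (fc R) B) i j * (map_mx conjC c) 0 j =
   fc R ((u *m B *m u^T) 0 0 + (v *m B *m v^T) 0 0) +
   'i%C * fc R (\sum_i \sum_j B i j * (v 0 i * u 0 j - u 0 i * v 0 j)).
  rewrite !qf_expand -big_split /= rmorph_sum rmorph_sum mulr_sumr -big_split /=.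
  apply: eq_bigr => i _; rewrite -big_split /= !rmorph_sum mulr_sumr -big_split /=.
  apply: eq_bigr => j _; rewrite !mxE ce ce rmorphD rmorphM /= !fr complexiE conjCi mulNr iring; last by rewrite -expr2 sqrCi.
  rewrite !(rmorphD, rmorphB, rmorphM) /=; ring.

have -> : \sum_i \sum_j B i j * (v 0 i * u 0 j - u 0 i * v 0 j) = 0.
  have H : \sum_i \sum_j B i j * (u 0 i * v 0 j) = \sum_i \sum_j B i j * (v 0 i * u 0 j).
    rewrite exchange_big; apply: eq_bigr => i _; apply: eq_bigr => j _.
    by rewrite Bs [u 0 j * _]mulrC.
  under eq_bigr do (under eq_bigr do rewrite mulrBr; rewrite sumrB).
  by rewrite sumrB H subrr.
have [hu hu'] := Bpos u; have [hv hv'] := Bpos v.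
rewrite rmorph0 mulr0 addr0 -(rmorph0 (fc R)) ltcR.
by case/orP: cnz' => [/hu' | /hv'] h; lra.
Qed.

Lemma key (R : rcfType) n k (M : 'M[R]_n) (E : 'M[R]_(k,n)) :
  M^T = M ->
  (forall c : 'rV[R]_k, 0 <= (c *m (E *m M *m E^T) *m c^T) 0 0 /\
       (c != 0 -> 0 < (c *m (E *m M *m E^T) *m c^T) 0 0)) ->
  exists s : seq R, [/\ size s = k, all (fun x => 0 < x) s &
    (\prod_(x <- s) ('X - x%:P)) %| char_poly M].
Proof.
move=> Msym Bpos.
have fr : forall r : R, conjC (fc R r) = fc R r.
  by move=> r; apply: conj_Creal; rewrite complex_real.
set MC := map_mx (fc R) M.
have herm : MC \is hermsymmx.
  apply/is_hermitianmxP; rewrite expr0 scale1r; apply/matrixP => i j.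
  by rewrite !mxE fr -[in LHS]Msym mxE.
set P := spectralmx MC; set D := spectral_diag MC.
have Pu : P \is unitarymx by apply: spectral_unitarymx.
have MCe : MC = P^t* *m diag_mx D *m P.
  rewrite -invmx_unitary //; exact/orthomx_spectralP/hermitian_normalmx.
have Dreal : forall j, D 0 j \is Num.real.
  by move=> j; move: (hermitian_spectral_diag_real herm) => /mxOverP; apply.
set pos := [seq j <- index_enum 'I_n | 0 < D 0 j].
have kp : (k <= size pos)%N.
  rewrite leqNgt; apply/negP => pk.
  pose t := in_tuple pos.
  pose Sel : 'M[R[i]]_(n, size pos) := \matrix_(j, l) ((j == tnth t l)%:R).
  pose F := map_mx (fc R) E *m P^t* *m Sel.
  have : ~~ row_free F.
    have h : (\rank F < k)%N by apply: leq_ltn_trans (rank_leq_col F) pk.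
    by rewrite /row_free neq_ltn h.
  rewrite -kermx_eq0 => /rowV0Pn [c /sub_kermxP cF cnz].
  pose x := c *m map_mx (fc R) E; pose y := x *m P^t*.
  have y0 : forall j, 0 < D 0 j -> y 0 j = 0.
    move=> j Dj; have : j \in t by rewrite mem_filter Dj mem_index_enum.
    case/tnthP => l ->.
    have yS : y *m Sel = c *m F by rewrite /y /x /F !mulmxA.
    have := congr1 (fun X : 'M[R[i]]_(1, size pos) => X 0 l) yS.
    rewrite cF mxE [X in _ = X]mxE => <-.
    rewrite (bigD1 (tnth t l)) //= big1 ?addr0 => [|j' ne].
      by rewrite /Sel !mxE eqxx mulr1.
    by rewrite /Sel !mxE (negbTE ne) mulr0.
  have q1 : (x *m MC *m x^t*) 0 0 <= 0.
    have -> : x *m MC *m x^t* = y *m diag_mx D *m y^t*.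
      have yt : y^t* = P *m x^t*.
        by rewrite /y trmx_mul map_mxM trmxCK.
      by rewrite yt MCe /y !mulmxA.
    clearbody y; rewrite mul_mx_diag mxE; apply: sumr_le0 => j _; rewrite !mxE.
    have [Dj|Dj] := boolP (0 < D 0 j); first by rewrite y0 // !mul0r.
    have Dle : D 0 j <= 0 by rewrite real_leNgt ?real0 ?Dreal.
    by rewrite mulrAC mulr_ge0_le0 // mul_conjC_ge0.
  have q2 : 0 < (x *m MC *m x^t*) 0 0.
    have Ef : (map_mx (fc R) E)^t* = map_mx (fc R) E^T.
      by apply/matrixP => i j; rewrite !mxE fr.
    have -> : x *m MC *m x^t* = c *m map_mx (fc R) (E *m M *m E^T) *m (map_mx conjC c)^T.
      rewrite /x trmx_mul map_mxM Ef !map_mxM map_trmx !mulmxA.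
      by [].
    apply: cpos cnz; last exact: Bpos.
    by rewrite !trmx_mul trmxK Msym mulmxA.
  by move: (lt_le_trans q2 q1); rewrite ltxx.
exists [seq complex.Re (D 0 j) | j <- take k pos]; split.
- by rewrite size_map size_takel.
- apply/allP => x /mapP [j /mem_take jin ->].
  move: jin; rewrite mem_filter => /andP [Dj _].
  by rewrite -ltcR (RRe_real (Dreal j)) (rmorph0 (fc R)).
rewrite -(dvdp_map (fc R)) map_char_poly -/MC rmorph_prod big_map.
rewrite MCe -invmx_unitary // charpoly_sim ?spectral_unit //.
rewrite char_poly_trig ?diag_mx_is_trig //.
under eq_bigr => j _ do rewrite /= map_polyXsubC /= (RRe_real (Dreal j)).
under [in X in _ %| X]eq_bigr do rewrite mxE eqxx mulr1n.
rewrite [X in _ %| X](bigID (fun j => 0 < D 0 j)) /=.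
apply: dvdp_trans (dvdp_mulIl _ _).
rewrite -[X in _ %| X]big_filter -/pos -[in X in _ %| X](cat_take_drop k pos) big_cat /=.
exact: dvdp_mulIl.
Qed.

Lemma Qmod2_E (R : rcfType) n k (M : 'M[R]_n) (S : 'I_k -> {set 'I_n}) i j :
  ((\matrix_(i0, j0) (j0 \in S i0)%:R : 'M[R]_(k, n)) *m M *m (\matrix_(i0, j0) (j0 \in S i0)%:R)^T) i j
  = Qmod2 M (S i) (S j).
Proof.
rewrite /Qmod2 !mxE; apply: eq_bigr => b _; rewrite !mxE; congr (_ * _).
by apply: eq_bigr => a _; rewrite !mxE.
Qed.

Theorem theorem6p2 (R : rcfType) (n : nat) (A : 'M[R]_n) (d : 'rV[R]_n)
    (v : 'cV[R]_n) (sigma : R) (k : nat) (S : 'I_k -> {set 'I_n})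
    (alpha : 'I_k -> R) :
  adjacency_mx A ->
  v != 0 -> (forall i, 0 <= v i 0) -> 0 < sigma ->
  (0 < k)%N ->
  (forall i j, i != j -> [disjoint S i & S j]) ->
  (forall i, S i != set0) ->
  (forall i, 0 < Qmod (A + diag_mx d - sigma *: (v *m v^T)) (S i)) ->
  (forall i j, i != j -> Qmod2 (A + diag_mx d - sigma *: (v *m v^T)) (S i) (S j) < 0) ->
  (forall i, 0 < alpha i) ->
  (forall i, alpha i * Qmod (A + diag_mx d - sigma *: (v *m v^T)) (S i) >
     \sum_(j < k | j != i) alpha j * `|Qmod2 (A + diag_mx d - sigma *: (v *m v^T)) (S i) (S j)|) ->
  at_least_pos_eigenvalues (A + diag_mx d - sigma *: (v *m v^T)) k.
Proof.
move=> [Asym _ _] _ _ _ _ _ _ _ _ apos hdom.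
set M := A + diag_mx d - sigma *: (v *m v^T).
have Msym : M^T = M.
  by rewrite /M linearB linearD /= tr_diag_mx Asym linearZ /= trmx_mul trmxK.
pose E : 'M[R]_(k, n) := \matrix_(i0, j0) (j0 \in S i0)%:R.
apply: (key Msym (E := E)).
apply: posdef apos _.
  by rewrite !trmx_mul trmxK Msym mulmxA.
move=> i; rewrite /E Qmod2_E; under eq_bigr do rewrite Qmod2_E.
exact: hdom i.
Qed.
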